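(* Let $T:M_d\to M_d$ be a completely positive map with $T(I)\le I$, whose stabilization index $n_T$ is finite. If $T$ is corner-faithful, then $T$ is unital, i.e. $T(I)=I$.
   Context: $M_d$ is the algebra of complex $d\times d$ matrices with the positive semidefinite order. The defect is $d(T)=I-T(I)\ge 0$. The stabilization index is $n_T=\min\{n\ge1: T^n(d(T))=0\}$ (with $T^0=\mathrm{id}$). For a positive semidefinite $x$, $\mathrm{supp}(x)$ denotes the orthogonal projection onto the range of $x$. When $n_T<\infty$, the orbit-support projection is $Q_T=\bigvee_{k<n_T}\mathrm{supp}(T^k(d(T)))$. $T$ is corner-faithful if for every $x\ge0$ with $x\neq0$ and $\mathrm{supp}(x)\le Q_T$ one has $T(x)\ne 0$. *)

(* Defs.v *)
From HB Require Import structures.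
From mathcomp Require Import all_boot all_order all_algebra.
From mathcomp Require Import complex reals.
From Stdlib Require Import ClassicalEpsilon.
Set Implicit Arguments. Unset Strict Implicit. Unset Printing Implicit Defensive.
Import Order.TTheory GRing.Theory Num.Theory.
Local Open Scope ring_scope.

Section MdDefs.
Variable R : realType.
Local Notation C := R[i].

Definition adj m n (A : 'M[C]_(m, n)) : 'M[C]_(n, m) := (map_mx conjc A)^T.

Definition psd n (A : 'M[C]_n) : Prop :=
  adj A = A /\ forall v : 'cV[C]_n, 0 <= (adj v *m A *m v) 0 0.

Definition lemx n (A B : 'M[C]_n) : Prop := psd (B - A).

Definition is_proj n (P : 'M[C]_n) : Prop := adj P = P /\ P *m P = P.

(* ampliation id_{M_n} (x) T acting on n x n block matrices with d x d blocks *)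
Definition ampl d (T : 'M[C]_d -> 'M[C]_d) (n : nat)
  (X : 'M[C]_(\sum_(i < n) (fun _ : 'I_n => d) i)) :
  'M[C]_(\sum_(i < n) (fun _ : 'I_n => d) i) :=
  \mxblock_(i < n, j < n) T (submxblock X i j).

Definition completely_positive d (T : {linear 'M[C]_d -> 'M[C]_d}) : Prop :=
  forall (n : nat) (X : 'M[C]_(\sum_(i < n) (fun _ : 'I_n => d) i)),
    psd X -> psd (ampl T X).

Definition defect d (T : 'M[C]_d -> 'M[C]_d) : 'M[C]_d := 1%:M - T 1%:M.

Definition stab_index d (T : 'M[C]_d -> 'M[C]_d) (n : nat) : Prop :=
  (0 < n)%N /\ iter n T (defect T) = 0 /\
  forall m : nat, (0 < m)%N -> iter m T (defect T) = 0 -> (n <= m)%N.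

(* P is the orthogonal projection onto the range (column space) of x *)
Definition is_supp d (x P : 'M[C]_d) : Prop :=
  is_proj P /\ (P^T == x^T)%MS.

(* supp(x): the orthogonal projection onto the range of x (chosen by epsilon;
   it exists and is unique) *)
Definition supp d (x : 'M[C]_d) : 'M[C]_d :=
  epsilon (inhabits 0) (fun P => is_supp x P).

Definition is_proj_join d n (F : nat -> 'M[C]_d) (P : 'M[C]_d) : Prop :=
  is_proj P /\ (forall k, (k < n)%N -> lemx (F k) P) /\
  forall Q, is_proj Q -> (forall k, (k < n)%N -> lemx (F k) Q) -> lemx P Q.

Definition proj_join d n (F : nat -> 'M[C]_d) : 'M[C]_d :=
  epsilon (inhabits 0) (fun P => is_proj_join n F P).

Definition orbit_supp d (T : 'M[C]_d -> 'M[C]_d) (n : nat) : 'M[C]_d :=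
  proj_join n (fun k => supp (iter k T (defect T))).

Definition corner_faithful d (T : 'M[C]_d -> 'M[C]_d) (n : nat) : Prop :=
  forall x : 'M[C]_d, psd x -> x <> 0 -> lemx (supp x) (orbit_supp T n) ->
    T x <> 0.

End MdDefs.

(* Main.v *)
Require Import Defs.
From HB Require Import structures.
From mathcomp Require Import all_boot all_order all_algebra.
From mathcomp Require Import complex reals.
From Stdlib Require Import ClassicalEpsilon.
Set Implicit Arguments. Unset Strict Implicit. Unset Printing Implicit Defensive.
Import Order.TTheory GRing.Theory Num.Theory.
Local Open Scope ring_scope.

Section Aux.
Variable R : realType.
Local Notation C := R[i].

Lemma adjK m n (A : 'M[C]_(m,n)) : adj (adj A) = A.
Proof.
rewrite /adj map_trmx trmxK -map_mx_comp; apply: map_mx_id => x /=; exact: conjcK.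
Qed.

Lemma adjM m n p (A : 'M[C]_(m,n)) (B : 'M[C]_(n,p)) : adj (A *m B) = adj B *m adj A.
Proof. by rewrite /adj map_mxM trmx_mul. Qed.

Lemma adjD m n (A B : 'M[C]_(m,n)) : adj (A + B) = adj A + adj B.
Proof. by rewrite /adj map_mxD linearD. Qed.

Lemma adjN m n (A : 'M[C]_(m,n)) : adj (- A) = - adj A.
Proof. by rewrite /adj map_mxN linearN. Qed.

Lemma adjB m n (A B : 'M[C]_(m,n)) : adj (A - B) = adj A - adj B.
Proof. by rewrite adjD adjN. Qed.

Lemma adj1 n : adj (1%:M : 'M[C]_n) = 1%:M.
Proof. by rewrite /adj map_mx1 trmx1. Qed.

Lemma adj0 m n : adj (0 : 'M[C]_(m,n)) = 0.
Proof. by rewrite /adj map_mx0 trmx0. Qed.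

Lemma adj_mul_ge0 n m (u : 'M[C]_(n,m)) i : 0 <= (adj u *m u) i i.
Proof.
rewrite !mxE; apply: sumr_ge0 => j _; rewrite !mxE mulrC; exact: mulcJ_ge0.
Qed.

Lemma adj_mul_eq0 n (u : 'cV[C]_n) : (adj u *m u) 0 0 = 0 -> u = 0.
Proof.
rewrite !mxE => /eqP; rewrite psumr_eq0 => [/allP H|j _]; last first.
  by rewrite !mxE mulrC; exact: mulcJ_ge0.
apply/matrixP => j k; rewrite (ord1 k) mxE.
have := H j (mem_index_enum _); rewrite !mxE mulf_eq0 => /orP[|/eqP//].
by rewrite conjc_eq0 => /eqP.
Qed.

Lemma proj_psd n (P : 'M[C]_n) : is_proj P -> psd P.
Proof.
move=> [hP PP]; split => // v.
have -> : adj v *m P *m v = adj (P *m v) *m (P *m v).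
  by rewrite adjM hP mulmxA -(mulmxA _ P P) PP.
exact: adj_mul_ge0.
Qed.


Lemma proj_herm_mul n (E : 'M[C]_n) (v : 'cV[C]_n) : is_proj E ->
  adj v *m E *m v = adj (E *m v) *m (E *m v).
Proof. by move=> [hE EE]; rewrite adjM hE mulmxA -(mulmxA _ E E) EE. Qed.

Lemma le_projW n (E Q : 'M[C]_n) : is_proj E -> is_proj Q -> Q *m E = E -> lemx E Q.
Proof.
move=> [hE EE] [hQ QQ] QE.
have EQ : E *m Q = E by rewrite -{1}hE -hQ -adjM QE hE.
apply: proj_psd; split; first by rewrite adjB hE hQ.
by rewrite mulmxBl !mulmxBr QQ QE EQ EE subrr subr0.
Qed.

Lemma mx_cV_eq0 m n (A : 'M[C]_(m,n)) : (forall w : 'cV[C]_n, A *m w = 0) -> A = 0.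
Proof.
move=> H; apply/matrixP => i j.
have := congr1 (fun M : 'cV[C]_m => M i 0) (H (delta_mx j 0)).
by rewrite -colE !mxE.
Qed.

Lemma le_projP n (E Q : 'M[C]_n) : is_proj E -> is_proj Q -> lemx E Q -> Q *m E = E.
Proof.
move=> pE pQ [_ hq]; have [hE EE] := pE; have [hQ QQ] := pQ.
suff H : E - Q *m E = 0 by apply/eqP; rewrite eq_sym -subr_eq0 H.
apply: mx_cV_eq0 => w; rewrite mulmxBl -mulmxA.
have [u ud] : exists u, u = E *m w by exists (E *m w).
rewrite -ud.
have [z zd] : exists z, z = u - Q *m u by exists (u - Q *m u).
rewrite -zd.
have Qz : Q *m z = 0 by rewrite zd mulmxBr (mulmxA Q Q) QQ subrr.
have Ez : E *m z = 0.
  apply: adj_mul_eq0; rewrite -proj_herm_mul //.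
  have := hq z; rewrite mulmxBr mulmxBl -mulmxA Qz mulmx0 add0r.
  rewrite mxE oppr_ge0 => h1; apply/eqP; rewrite eq_le h1 /=.
  rewrite proj_herm_mul //; exact: adj_mul_ge0.
apply: adj_mul_eq0.
have -> : adj z *m z = adj w *m (E *m z).
  rewrite {1}zd adjB adjM hQ mulmxBl -mulmxA Qz mulmx0 subr0.
  by rewrite ud adjM hE mulmxA.
by rewrite Ez mulmx0 mxE.
Qed.

Lemma proj_col n m (Q : 'M[C]_n) (Y : 'M[C]_(n,m)) : is_proj Q ->
  (Q *m Y = Y) <-> (Y^T <= Q^T)%MS.
Proof.
move=> [hQ QQ]; split.
  by move=> <-; rewrite trmx_mul submxMl.
case/submxP => D hD.
by rewrite -(trmxK Y) hD trmx_mul trmxK mulmxA QQ.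
Qed.


Lemma conj_mxK m n (A : 'M[C]_(m,n)) : map_mx conjc (map_mx conjc A) = A.
Proof. rewrite -map_mx_comp; apply: map_mx_id => x /=; exact: conjcK. Qed.

Lemma adj_eq0 m n (A : 'M[C]_(m,n)) : adj A = 0 -> A = 0.
Proof. by move=> h; rewrite -(adjK A) h adj0. Qed.

Lemma proj_exists n m (X : 'M[C]_(n,m)) : exists P : 'M[C]_n, is_proj P /\ (P^T == X^T)%MS.
Proof.
set B := row_base (X^T).
set M := B^T.
set G := adj M *m M.
have hG : adj G = G by rewrite /G adjM adjK.
have uG : G \in unitmx.
  rewrite -row_free_unit; apply: inj_row_free => v vG.
  set y := v *m adj M.
  have y0 : y = 0.
    apply: adj_eq0; apply: adj_mul_eq0; rewrite adjK /y adjM adjK mulmxA -(mulmxA v) -/G vG.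
    by rewrite mul0mx mxE.
  have : map_mx conjc v *m B = 0 *m B.
    rewrite mul0mx -(conj_mxK B) -map_mxM.
    by move: y0; rewrite /y /adj /M map_trmx trmxK => ->; rewrite map_mx0.
  move/(row_free_inj (row_base_free _)) => h.
  by rewrite -(conj_mxK v) h map_mx0.
exists (M *m invmx G *m adj M); split; first split.
- by rewrite !adjM adjK /adj map_invmx trmx_inv -/(adj G) hG mulmxA.
- rewrite -!mulmxA (mulmxA (adj M) M) -/G (mulmxA G) mulmxV // mul1mx.
  by [].
have PM : M *m invmx G *m adj M *m M = M by rewrite -mulmxA -/G -mulmxA mulVmx // mulmx1.
apply/andP; split.
  by rewrite -(eq_row_base (X^T)) -/B -mulmxA trmx_mul /M trmxK submxMl.
rewrite -(eq_row_base (X^T)) -/B.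
have e : B *m (M *m invmx G *m adj M)^T = B.
  by rewrite -[X in X *m _](trmxK B) -trmx_mul -/M PM /M trmxK.
by rewrite -[X in (X <= _)%MS]e submxMl.
Qed.


Lemma join_exists n m (F : nat -> 'M[C]_m) :
  (forall k, (k < n)%N -> is_proj (F k)) -> exists P, is_proj_join n F P.
Proof.
move=> hF.
have [P [pP]] := proj_exists ((\sum_(k < n) (F k)^T)%MS)^T.
rewrite trmxK => /eqmxP eP.
exists P; split=> //; split.
  move=> k hk; apply: le_projW => //; first exact: hF.
  apply/(proj_col _ pP); rewrite eP.
  exact: (sumsmx_sup (Ordinal hk)).
move=> Q pQ hQ; apply: le_projW => //.
apply/(proj_col _ pQ); rewrite eP.
apply/sumsmx_subP => k _.
apply/(proj_col _ pQ); apply: le_projP => //; [exact: hF | exact: hQ].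
Qed.


Lemma psd_conj a b (S : 'M[C]_(a,b)) (Y : 'M[C]_b) : psd Y -> psd (S *m Y *m adj S).
Proof.
move=> [hY pY]; split; first by rewrite !adjM adjK hY mulmxA.
move=> v; have -> : adj v *m (S *m Y *m adj S) *m v = adj (adj S *m v) *m Y *m (adj S *m v).
  by rewrite adjM adjK !mulmxA.
exact: pY.
Qed.

Lemma mxsub_conj a b (f : 'I_a -> 'I_b) (Y : 'M[C]_b) :
  mxsub f f Y = rowsub f 1%:M *m Y *m adj (rowsub f 1%:M).
Proof.
have -> : mxsub f f Y = colsub f (rowsub f Y) by apply/matrixP => i j; rewrite !mxE.
rewrite rowsubE /adj map_mxsub map_mx1 trmx_mxsub trmx1.
by rewrite mulmx_colsub mulmx1.
Qed.

Lemma psd_mxsub a b (f : 'I_a -> 'I_b) (Y : 'M[C]_b) : psd Y -> psd (mxsub f f Y).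
Proof. by move=> h; rewrite mxsub_conj; apply: psd_conj. Qed.

Lemma cp_pos d (T : {linear 'M[C]_d -> 'M[C]_d}) : completely_positive T ->
  forall A, psd A -> psd (T A).
Proof.
move=> hT A pA.
have e : (\sum_(i < 1) (fun _ : 'I_1 => d) i = d)%N by rewrite big_ord1.
set X := mxsub (cast_ord e) (cast_ord e) A.
have := hT 1%N X (psd_mxsub _ pA).
rewrite /ampl => /(psd_mxsub (tagnat.Rank (ord0 : 'I_1))).
rewrite -/(submxblock _ ord0 ord0) mxblockK.
suff -> : submxblock X ord0 ord0 = A by [].
have hR : forall k : 'I_d, nat_of_ord (@tagnat.Rank 1 (fun _ : 'I_1 => d) ord0 k) = k.
  by move=> k; rewrite tagnat.RankEsum big_pred0.
by apply/matrixP => i j; rewrite !mxE; congr (A _ _); apply: val_inj; exact: hR.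
Qed.

End Aux.

Theorem theorem4p16 (R : realType) (d : nat)
  (T : {linear 'M[R[i]]_d -> 'M[R[i]]_d}) (nT : nat) :
  completely_positive T ->
  lemx (T 1%:M) 1%:M ->
  stab_index T nT ->
  corner_faithful T nT ->
  T 1%:M = 1%:M.
Proof.
move=> hCP hle [hn [hnT hmin]] hcf.
have pD : psd (defect T) by exact: hle.
have pit : forall k, psd (iter k T (defect T)).
  by elim=> [|k IH] //=; apply: cp_pos.
have hsupp : forall y : 'M[R[i]]_d, is_supp y (supp y).
  move=> y; apply: epsilon_spec; exact: proj_exists.
have hQ : is_proj_join nT (fun k => supp (iter k T (defect T))) (orbit_supp T nT).
  apply: epsilon_spec; apply: join_exists => k _; exact: (hsupp _).1.
set x := iter nT.-1 T (defect T).
have Tx : T x = 0 by rewrite /x -iterS prednK.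
have x0 : x = 0.
  case: (eqVneq x 0) => // /eqP xn0; exfalso.
  apply: (hcf x (pit _) xn0) Tx.
  by apply: hQ.2.1; rewrite prednK.
case: (posnP nT.-1) => [e0|hp]; last first.
  by have := hmin _ hp x0; rewrite leqNgt ltn_predL hn.
move: x0; rewrite /x e0 /= /defect => /eqP.
by rewrite subr_eq0 => /eqP <-.
Qed.
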